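(* In the setting of the context, suppose the step-size satisfies $\alpha\in(0,\overline{\alpha})$, where $$\overline{\alpha}=\min\left\{\frac{\sqrt{\Delta^2+4ns(1-\sigma)^2cd\epsilon l^2yy_-^2(l+ns)}-\Delta}{2cd\epsilon l^2yy_-^2(l+ns)},\ \frac{1}{nl}\right\},\qquad \Delta=nscd\epsilon ly_-(1-\sigma+\tau).$$ Then for all $k\ge0$: (a) with $\Gamma_1=\frac{1}{\gamma_1}\sqrt{(\alpha ly_-T)^2+(\alpha yl+2)^2(d\epsilon ly_-^2T)^2}\in(0,\infty)$ we have $\|H_k\|_2=\Gamma_1\gamma_1^k$; (b) there exist $0<\gamma_2<1$ and $0<\Gamma_2<\infty$ such that $\|G^k\|_2\le\Gamma_2\gamma_2^k$; (c) with $\gamma=\max\{\gamma_1,\gamma_2\}$ and $\Gamma=\Gamma_1\Gamma_2/\gamma$, for all $0\le r\le k-1$, $\|G^{k-r-1}H_r\|_2\le\Gamma\gamma^k$.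
   Context: Let $n,p\ge1$, $\mathcal{G}$ a strongly-connected directed graph on $\{1,\dots,n\}$, $\underline{A}=(a_{ij})\in\mathbb{R}^{n\times n}$ with $a_{ij}>0$ if $i$ is an out-neighbor of $j$ or $i=j$, $a_{ij}=0$ otherwise, and columns summing to $1$; $A=\underline{A}\otimes I_p$, $A_\infty=\lim_kA^k$; $\mathbf{y}_k=\underline{A}^k\mathbf{1}_n$, $Y_k=\mathrm{diag}(\mathbf{y}_k)\otimes I_p$, $Y_\infty=\lim_kY_k$. Let $l,s>0$ be the Lipschitz-gradient and strong-convexity constants of differentiable local functions $f_i:\mathbb{R}^p\to\mathbb{R}$ (i.e. $\|\nabla f_i(\mathbf{z}_1)-\nabla f_i(\mathbf{z}_2)\|_2\le l\|\mathbf{z}_1-\mathbf{z}_2\|_2$ and $f_i(\mathbf{z}_1)-f_i(\mathbf{z}_2)\le\nabla f_i(\mathbf{z}_1)^\top(\mathbf{z}_1-\mathbf{z}_2)-\frac s2\|\mathbf{z}_1-\mathbf{z}_2\|_2^2$). Constants: $\tau=\|A-I_{np}\|_2$, $\epsilon=\|I_{np}-A_\infty\|_2$, $\eta=\max(|1-n\alpha l|,|1-n\alpha s|)$, $y=\sup_k\|Y_k\|_2$, $y_-=\sup_k\|Y_k^{-1}\|_2$; $\gamma_1\in(0,1)$, $T\in(0,\infty)$ are constants with $\|Y_k-Y_\infty\|_2\le T\gamma_1^k$ for all $k\ge0$; $|||\cdot|||$ is a matrix norm on $\mathbb{R}^{np\times np}$ with compatible vector norm $\|\cdot\|$ such that $\sigma:=|||A-A_\infty|||<1$;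 $c,d>0$ satisfy $\|\mathbf{v}\|_2\le c\|\mathbf{v}\|$ and $\|\mathbf{v}\|\le d\|\mathbf{v}\|_2$. Matrices: $$G=\begin{bmatrix}\sigma&0&\alpha\\ \alpha cly_-&\eta&0\\ cd\epsilon ly_-(\tau+\alpha lyy_-)&\alpha d\epsilon l^2yy_-&\sigma+\alpha cd\epsilon ly_-\end{bmatrix},\quad H_k=\begin{bmatrix}0&0&0\\ \alpha ly_-T\gamma_1^{k-1}&0&0\\ (\alpha ly+2)d\epsilon ly_-^2T\gamma_1^{k-1}&0&0\end{bmatrix}.$$ $\|\cdot\|_2$ on matrices is the spectral norm. *)

(* Defs.v *)
From HB Require Import structures.
From mathcomp Require Import all_boot all_order all_algebra.
From mathcomp Require Import all_classical all_reals all_analysis.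
From mathcomp Require Export mxtens.
Set Implicit Arguments. Unset Strict Implicit. Unset Printing Implicit Defensive.
Import Order.TTheory GRing.Theory Num.Theory.
Import numFieldNormedType.Exports.
Local Open Scope classical_set_scope.
Local Open Scope ring_scope.

Section Defs.
Variable R : realType.

Definition norm2 {m : nat} (v : 'cV[R]_m) : R := Num.sqrt (\sum_i v i 0 ^+ 2).

Definition dotv {m : nat} (u v : 'cV[R]_m) : R := \sum_i u i 0 * v i 0.

Definition specnorm {m n : nat} (M : 'M[R]_(m, n)) : R :=
  sup [set norm2 (M *m v) | v in [set v : 'cV[R]_n | norm2 v <= 1]].

Definition mx3 (a11 a12 a13 a21 a22 a23 a31 a32 a33 : R) : 'M[R]_3 :=
  \matrix_(i < 3, j < 3)
    nth 0 (nth [::] [:: [:: a11; a12; a13]; [:: a21; a22; a23];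
                        [:: a31; a32; a33]] i) j.

Definition is_vnorm {N : nat} (nv : 'cV[R]_N -> R) : Prop :=
  [/\ forall v, 0 <= nv v,
      forall v, nv v = 0 -> v = 0,
      forall (a : R) v, nv (a *: v) = `|a| * nv v &
      forall u v, nv (u + v) <= nv u + nv v].

Definition is_mxnorm {N : nat} (nm : 'M[R]_N -> R) : Prop :=
  [/\ forall M, 0 <= nm M,
      forall M, nm M = 0 -> M = 0,
      forall (a : R) M, nm (a *: M) = `|a| * nm M,
      forall M M', nm (M + M') <= nm M + nm M' &
      forall M M', nm (M *m M') <= nm M * nm M'].

Definition compatible_norms {N : nat} (nm : 'M[R]_N -> R) (nv : 'cV[R]_N -> R) :=
  forall M v, nv (M *m v) <= nm M * nv v.

End Defs.

(* Main.v *)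
Require Import Defs.
From HB Require Import structures.
From mathcomp Require Import all_boot all_order all_algebra.
From mathcomp Require Import all_classical all_reals all_analysis.
From mathcomp Require Import ring lra.
Import Order.TTheory GRing.Theory Num.Theory.
Import numFieldNormedType.Exports.
Local Open Scope classical_set_scope.
Local Open Scope ring_scope.

Set Implicit Arguments. Unset Strict Implicit.
Section H.
Variable R : realType.

Lemma sup_ge0' (E : set R) x0 : E x0 -> (forall x, E x -> 0 <= x) -> 0 <= sup E.
Proof.
move=> Ex0 pos.
have [ub|nub] := pselect (has_ubound E).
  exact: le_trans (pos _ Ex0) (ub_le_sup ub Ex0).
by rewrite sup_out // => -[].
Qed.

Lemma norm2_ge0 m (v : 'cV[R]_m) : 0 <= norm2 v.
Proof. exact: sqrtr_ge0. Qed.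

Lemma norm2_0 m : norm2 (0 : 'cV[R]_m) = 0.
Proof. by rewrite /norm2 big1 ?sqrtr0 // => i _; rewrite mxE expr0n. Qed.

Lemma specnorm_ge0 m k (M : 'M[R]_(m,k)) : 0 <= specnorm M.
Proof.
apply: (@sup_ge0' _ 0).
  by exists 0; rewrite /= ?mulmx0 norm2_0.
by move=> x [v _ <-]; exact: norm2_ge0.
Qed.

Lemma specnorm_le m k (M : 'M[R]_(m,k)) B :
  (forall v, norm2 v <= 1 -> norm2 (M *m v) <= B) -> specnorm M <= B.
Proof.
move=> h; apply: ge_sup.
  by exists (norm2 (M *m 0)), 0; rewrite //= norm2_0.
by move=> x [v /= hv <-]; exact: h.
Qed.

Lemma specnorm_ge m k (M : 'M[R]_(m,k)) B v :
  (forall v, norm2 v <= 1 -> norm2 (M *m v) <= B) -> norm2 v <= 1 ->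
  norm2 (M *m v) <= specnorm M.
Proof.
move=> h hv; apply: ub_le_sup; last by exists v.
by exists B => x [w /= hw <-]; exact: h.
Qed.

Definition i0 : 'I_3 := @Ordinal 3 0 isT.
Definition i1 : 'I_3 := @Ordinal 3 1 isT.
Definition i2 : 'I_3 := @Ordinal 3 2 isT.

Lemma big3 (F : 'I_3 -> R) : \sum_(j < 3) F j = F i0 + F i1 + F i2.
Proof.
rewrite !big_ord_recl big_ord0 addr0 addrA.
by congr (F _ + F _ + F _); apply: val_inj.
Qed.

Lemma ord3P (P : 'I_3 -> Prop) : P i0 -> P i1 -> P i2 -> forall i, P i.
Proof.
move=> h0 h1 h2 [[|[|[|k]]] hk].
- by rewrite (_ : Ordinal hk = i0) //; apply: val_inj.
- by rewrite (_ : Ordinal hk = i1) //; apply: val_inj.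
- by rewrite (_ : Ordinal hk = i2) //; apply: val_inj.
- by [].
Qed.

Lemma mulmx3 (M : 'M[R]_3) (w : 'cV[R]_3) i :
  (M *m w) i 0 = M i i0 * w i0 0 + M i i1 * w i1 0 + M i i2 * w i2 0.
Proof. by rewrite mxE big3. Qed.

Lemma norm23 (w : 'cV[R]_3) :
  norm2 w = Num.sqrt (w i0 0 ^+ 2 + w i1 0 ^+ 2 + w i2 0 ^+ 2).
Proof. by rewrite /norm2 big3. Qed.

Lemma coord_le m (v : 'cV[R]_m) i : `|v i 0| <= norm2 v.
Proof.
rewrite -sqrtr_sqr /norm2 ler_wsqrtr // (bigD1 i) //= lerDl.
by apply: sumr_ge0 => j _; exact: sqr_ge0.
Qed.

Lemma norm23_le (w : 'cV[R]_3) :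
  norm2 w <= `|w i0 0| + `|w i1 0| + `|w i2 0|.
Proof.
rewrite norm23.
have h : 0 <= `|w i0 0| + `|w i1 0| + `|w i2 0| by rewrite !addr_ge0.
rewrite -(ger0_norm h) -sqrtr_sqr ler_wsqrtr //.
rewrite -[w i0 0 ^+ 2]real_normK ?num_real // -[w i1 0 ^+ 2]real_normK ?num_real //.
rewrite -[w i2 0 ^+ 2]real_normK ?num_real //.
have := normr_ge0 (w i0 0); have := normr_ge0 (w i1 0); have := normr_ge0 (w i2 0).
move: `|w i0 0| `|w i1 0| `|w i2 0| => x y z hz hy hx; nra.
Qed.

Lemma decay_pt (M : 'M[R]_3) (dl : 'cV[R]_3) lam C (v : 'cV[R]_3) :
  (forall i j, 0 <= M i j) -> (forall i, 0 <= dl i 0) ->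
  (forall i, (M *m dl) i 0 <= lam * dl i 0) -> 0 <= lam -> 0 <= C ->
  (forall i, `|v i 0| <= C * dl i 0) ->
  forall k i, `|(M ^+ k *m v) i 0| <= C * lam ^+ k * dl i 0.
Proof.
move=> M0 d0 Md l0 C0 hv; elim=> [|k IH] i.
  by rewrite expr0 mul1mx expr0 mulr1.
rewrite exprS -mulmxE -mulmxA mxE.
apply: le_trans (ler_norm_sum _ _ _) _.
apply: (@le_trans _ _ (\sum_j M i j * (C * lam ^+ k * dl j 0)))...
  apply: ler_sum => j _; rewrite normrM ger0_norm //.
  by apply: ler_wpM2l => //; exact: IH.
have -> : \sum_j M i j * (C * lam ^+ k * dl j 0) = C * lam ^+ k * (M *m dl) i 0.
  by rewrite mxE mulr_sumr; apply: eq_bigr => j _; ring.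
rewrite exprS [lam * _]mulrC mulrA -[X in _ <= X]mulrA.
apply: ler_wpM2l; first by rewrite mulr_ge0 // exprn_ge0.
exact: Md.
Qed.

Definition col3 (x y z : R) : 'cV[R]_3 := \col_(i < 3) nth 0 [:: x; y; z] i.

Lemma G_decay (sg al a et b c' e : R) :
  0 <= sg -> sg < 1 -> 0 < al -> 0 <= a -> 0 <= et -> et < 1 -> 0 <= b ->
  0 <= c' -> 0 <= e ->
  0 < (1 - sg) * (1 - et) * (1 - sg - e) - al * b * (1 - et) - al * a * c' ->
  exists lam Gm, [/\ 0 < lam, lam < 1, 0 < Gm &
    forall k v, norm2 (mx3 sg 0 al a et 0 b c' (sg + e) ^+ k *m v)
                <= Gm * lam ^+ k * norm2 v].
Proof.
move=> s0 s1 al0 a0 e0 e1 b0 c0 ee0 D0.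
set D := _ - _ - _ in D0.
have r0 : 0 < 1 - sg - e.
  rewrite ltNge; apply/negP => hr.
  have : (1 - sg) * (1 - et) * (1 - sg - e) <= 0.
    by rewrite pmulr_rle0 // mulr_gt0 // subr_gt0.
  have : 0 <= al * b * (1 - et) + al * a * c'.
    by rewrite addr_ge0 // !mulr_ge0 // ?subr_ge0 // ltW.
  rewrite /D in D0; lra.
set d1 := (al * (1 - et) + al * c' + (1 - sg - e) * (1 - et)) / D.
set d2 := (1 + a * d1) / (1 - et).
set d3 := ((1 - sg) * d1 - 1) / al.
have d1p : 0 < d1.
  rewrite /d1 divr_gt0 //.
  have q0 : 0 < 1 - et by rewrite subr_gt0.
  have := mulr_gt0 al0 q0; have := mulr_gt0 r0 q0; have := mulr_ge0 (ltW al0) c0.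
  lra.
have d2p : 0 < d2.
  rewrite /d2 divr_gt0 ?subr_gt0 //.
  have := mulr_ge0 a0 (ltW d1p); lra.
have d3p : 0 < d3.
  rewrite /d3 divr_gt0 // subr_gt0 /d1 mulrA ltr_pdivlMr // mul1r.
  have q0 : 0 < 1 - et by rewrite subr_gt0.
  have -> : (1 - sg) * (al * (1 - et) + al * c' + (1 - sg - e) * (1 - et)) =
     D + ((1 - sg) * al * (1 - et) + (1 - sg) * al * c' + al * b * (1 - et) + al * a * c').
    by rewrite /D; ring.
  rewrite ltrDl.
  have s0' : 0 < 1 - sg by rewrite subr_gt0.
  have := mulr_gt0 (mulr_gt0 s0' al0) q0.
  have := mulr_ge0 (mulr_ge0 (ltW s0') (ltW al0)) c0.
  have := mulr_ge0 (mulr_ge0 (ltW al0) b0) (ltW q0).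
  have := mulr_ge0 (mulr_ge0 (ltW al0) a0) c0.
  lra.
have Ddef : D = (1 - sg) * (1 - et) * (1 - sg - e) - al * b * (1 - et) - al * a * c' by [].
have Dn0 : D != 0 by rewrite gt_eqF.
have qn0 : (1 - et) != 0 by rewrite gt_eqF // subr_gt0.
have aln0 : al != 0 by rewrite gt_eqF.
set G := mx3 sg 0 al a et 0 b c' (sg + e).
set dl := col3 d1 d2 d3.
have Gd : forall i, (G *m dl) i 0 = dl i 0 - 1.
  apply: ord3P; rewrite mulmx3 !mxE /=.
  - rewrite /d3 [al * _]mulrC divfK //; ring.
  - have h : (1 - et) * d2 = 1 + a * d1 by rewrite /d2 mulrC divfK.
    nra.
  - have h2 : (1 - et) * d2 = 1 + a * d1 by rewrite /d2 mulrC divfK.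
    have h1 : al * d3 = (1 - sg) * d1 - 1 by rewrite /d3 mulrC divfK.
    have h3 : D * d1 = al * (1 - et) + al * c' + (1 - sg - e) * (1 - et).
      by rewrite /d1 mulrC divfK.
    have E : al * (1 - et) * (b * d1 + c' * d2 + (sg + e) * d3 - d3 + 1) =
      al * (1 - et) * b * d1 + al * c' * ((1 - et) * d2)
      + (sg + e - 1) * (1 - et) * (al * d3) + al * (1 - et) by ring.
    rewrite h2 h1 in E.
    have E2 : al * (1 - et) * b * d1 + al * c' * (1 + a * d1) +
       (sg + e - 1) * (1 - et) * ((1 - sg) * d1 - 1) + al * (1 - et) =
       (al * (1 - et) + al * c' + (1 - sg - e) * (1 - et)) - D * d1.
      by rewrite /D; ring.
    rewrite E2 h3 subrr in E.
    move/eqP: E; rewrite mulf_eq0 mulf_eq0 (negbTE aln0) (negbTE qn0) /=.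
    move=> /eqP h; lra.
have dlpos : forall i, 0 < dl i 0 by apply: ord3P; rewrite mxE.
have dlle : forall i, dl i 0 <= d1 + d2 + d3 by apply: ord3P; rewrite mxE /=; lra.
set Mx := d1 + d2 + d3 + 1.
have Mx1 : 1 < Mx by rewrite /Mx; lra.
have Mx0 : 0 < Mx by lra.
have iMx1 : Mx^-1 < 1 by rewrite invf_lt1.
have iMx0 : 0 < Mx^-1 by rewrite invr_gt0.
set Si := d1^-1 + d2^-1 + d3^-1.
have Si0 : 0 < Si by rewrite /Si !addr_gt0 // invr_gt0.
exists (1 - Mx^-1), (Si * (d1 + d2 + d3)); split.
- lra.
- lra.
- by rewrite mulr_gt0 // !addr_gt0.
move=> k v.
have GM0 : forall i j, 0 <= G i j.
  apply: ord3P; apply: ord3P; rewrite mxE /=; lra.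
have Md : forall i, (G *m dl) i 0 <= (1 - Mx^-1) * dl i 0.
  move=> i; rewrite Gd.
  have : dl i 0 * Mx^-1 <= 1.
    by rewrite ler_pdivrMr // mul1r /Mx; have := dlle i; lra.
  lra.
have hv : forall i, `|v i 0| <= norm2 v * Si * dl i 0.
  move=> i; apply: (le_trans (coord_le v i)).
  have nv := norm2_ge0 v; rewrite -mulrA ler_peMr //.
  have j1 : 0 < d1^-1 by rewrite invr_gt0.
  have j2 : 0 < d2^-1 by rewrite invr_gt0.
  have j3 : 0 < d3^-1 by rewrite invr_gt0.
  move: i; apply: ord3P; rewrite /dl /col3 mxE /= /Si.
  - rewrite mulrDl mulrDl mulVf ?gt_eqF //.
    have := mulr_gt0 j2 d1p; have := mulr_gt0 j3 d1p; lra.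
  - rewrite mulrDl mulrDl [d2^-1 * _]mulVf ?gt_eqF //.
    have := mulr_gt0 j1 d2p; have := mulr_gt0 j3 d2p; lra.
  - rewrite mulrDl mulrDl [d3^-1 * _]mulVf ?gt_eqF //.
    have := mulr_gt0 j1 d3p; have := mulr_gt0 j2 d3p; lra.
have l0 : 0 <= 1 - Mx^-1 by lra.
have := decay_pt GM0 (fun i => ltW (dlpos i)) Md l0
   (mulr_ge0 (norm2_ge0 v) (ltW Si0)) hv k.
move=> H; apply: le_trans (norm23_le _) _.
have := H i0; have := H i1; have := H i2; rewrite !mxE /=.
set Cl := norm2 v * Si * (1 - Mx^-1) ^+ k.
have -> : Si * (d1 + d2 + d3) * (1 - Mx^-1) ^+ k * norm2 v = Cl * (d1 + d2 + d3).
  by rewrite /Cl; ring.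
lra.
Qed.

Lemma norm2_sq m (v : 'cV[R]_m) : norm2 v ^+ 2 = \sum_i v i 0 ^+ 2.
Proof. by rewrite sqr_sqrtr // sumr_ge0 // => i _; exact: sqr_ge0. Qed.

Lemma norm2N m (v : 'cV[R]_m) : norm2 (- v) = norm2 v.
Proof. by rewrite /norm2; congr Num.sqrt; apply: eq_bigr => i _; rewrite mxE sqrrN. Qed.

Lemma dotvN m (u v : 'cV[R]_m) : dotv u (- v) = - dotv u v.
Proof. by rewrite /dotv -sumrN; apply: eq_bigr => i _; rewrite mxE mulrN. Qed.

Lemma dotvBl m (u w v : 'cV[R]_m) : dotv (u - w) v = dotv u v - dotv w v.
Proof. by rewrite /dotv -sumrB; apply: eq_bigr => i _; rewrite !mxE mulrBl. Qed.

Lemma dot_bound m (u d : 'cV[R]_m) l :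
  2 * l * dotv u d <= norm2 u ^+ 2 + l ^+ 2 * norm2 d ^+ 2.
Proof.
rewrite !norm2_sq.
have h : 0 <= \sum_i (u i 0 - l * d i 0) ^+ 2 by apply: sumr_ge0 => i _; exact: sqr_ge0.
have E : \sum_i (u i 0 - l * d i 0) ^+ 2 =
  \sum_i u i 0 ^+ 2 + l ^+ 2 * \sum_i d i 0 ^+ 2 - 2 * l * dotv u d.
  rewrite /dotv !mulr_sumr -big_split -sumrB /=; apply: eq_bigr => i _; ring.
lra.
Qed.

Lemma s_le_l p (g : 'cV[R]_p -> 'cV[R]_p) (f0 : 'cV[R]_p -> R) l s :
  (0 < p)%N -> 0 < l ->
  (forall z1 z2, norm2 (g z1 - g z2) <= l * norm2 (z1 - z2)) ->
  (forall z1 z2, f0 z1 - f0 z2 <=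
     dotv (g z1) (z1 - z2) - s / 2 * norm2 (z1 - z2) ^+ 2) -> s <= l.
Proof.
move=> p0 l0 Lip SC.
set d : 'cV[R]_p := const_mx 1.
have N2 : norm2 d ^+ 2 = p%:R.
  rewrite norm2_sq (eq_bigr (fun=> 1)); last by move=> i _; rewrite mxE expr1n.
  by rewrite sumr_const card_ord.
have Np : 0 < norm2 d ^+ 2 by rewrite N2 ltr0n.
have h1 := SC d 0; have h2 := SC 0 d.
rewrite subr0 in h1; rewrite sub0r norm2N dotvN in h2.
have L := Lip d 0; rewrite subr0 in L.
have B := dot_bound (g d - g 0) d l.
rewrite dotvBl in B.
have u0 := norm2_ge0 (g d - g 0).
have nd0 := norm2_ge0 d.
have : norm2 (g d - g 0) ^+ 2 <= (l * norm2 d) ^+ 2.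
  by apply: lerXn2r; rewrite ?nnegrE // mulr_ge0 // ltW.
rewrite exprMn => L2.
set N := norm2 d ^+ 2 in Np h1 h2 B L2.
set U := norm2 (g d - g 0) ^+ 2 in B L2.
have : s * N <= l * N.
  have : 2 * l * (s * N) <= 2 * l * (l * N) by nra.
  by rewrite ler_pM2l // mulr_gt0.
by rewrite ler_pM2r.
Qed.

Lemma Hnorm (a b : R) (v : 'cV[R]_3) :
  norm2 (mx3 0 0 0 a 0 0 b 0 0 *m v) = `|v i0 0| * Num.sqrt (a ^+ 2 + b ^+ 2).
Proof.
rewrite norm23 !mulmx3 !mxE /= !mul0r !addr0 expr0n /= add0r.
rewrite -sqrtr_sqr -sqrtrM ?sqr_ge0 //; congr Num.sqrt; ring.
Qed.

End H.

Ltac pos := repeat first [assumption | apply: mulr_ge0 | apply: addr_ge0 |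
  apply: exprn_ge0 | (apply: ltW; assumption) | apply: ler0n | done].

Theorem lemma5 (R : realType) (n p : nat) (e : rel 'I_n)
  (Abar : 'M[R]_n)
  (f : 'I_n -> 'cV[R]_p -> R) (gradf : 'I_n -> 'cV[R]_p -> 'cV[R]_p)
  (l s : R)
  (Ainf : 'M[R]_(n * p)) (Yinf : 'M[R]_(n * p))
  (gamma1 T : R)
  (mnorm : 'M[R]_(n * p) -> R) (vnorm : 'cV[R]_(n * p) -> R)
  (c d alpha : R) :
  (0 < n)%N -> (0 < p)%N ->
  (* strongly connected digraph; e j i : there is an edge j -> i,
     i.e. i is an out-neighbour of j *)
  (forall i j, connect e i j) ->
  (forall i j, (e j i || (i == j)) -> 0 < Abar i j) ->
  (forall i j, ~~ (e j i || (i == j)) -> Abar i j = 0) ->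
  (forall j, \sum_i Abar i j = 1) ->
  let A : 'M[R]_(n * p) := Abar *t (1%:M : 'M[R]_p) in
  (fun k => A ^+ k) @ \oo --> Ainf ->
  let yv k : 'cV[R]_n := Abar ^+ k *m const_mx 1 in
  let Y k : 'M[R]_(n * p) := diag_mx (yv k)^T *t (1%:M : 'M[R]_p) in
  Y @ \oo --> Yinf ->
  (* local functions: differentiable, l-Lipschitz gradient, s-strongly convex *)
  0 < l -> 0 < s ->
  (forall i x, differentiable (f i) x) ->
  (forall i x v, 'D_v (f i) x = dotv (gradf i x) v) ->
  (forall i z1 z2, norm2 (gradf i z1 - gradf i z2) <= l * norm2 (z1 - z2)) ->
  (forall i z1 z2, f i z1 - f i z2 <=
     dotv (gradf i z1) (z1 - z2) - s / 2 * norm2 (z1 - z2) ^+ 2) ->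
  let tau := specnorm (A - 1) in
  let eps := specnorm (1 - Ainf) in
  let eta := Num.max `|1 - n%:R * alpha * l| `|1 - n%:R * alpha * s| in
  let y := sup (range (fun k => specnorm (Y k))) in
  let ym := sup (range (fun k => specnorm (invmx (Y k)))) in
  0 < gamma1 < 1 -> 0 < T ->
  (forall k, specnorm (Y k - Yinf) <= T * gamma1 ^+ k) ->
  is_vnorm vnorm -> is_mxnorm mnorm -> compatible_norms mnorm vnorm ->
  let sigma := mnorm (A - Ainf) in
  sigma < 1 ->
  0 < c -> 0 < d ->
  (forall v, norm2 v <= c * vnorm v) ->
  (forall v, vnorm v <= d * norm2 v) ->
  let G := mx3
    sigma 0 alpha
    (alpha * c * l * ym) eta 0
    (c * d * eps * l * ym * (tau + alpha * l * y * ym))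
      (alpha * d * eps * l ^+ 2 * y * ym)
      (sigma + alpha * c * d * eps * l * ym) in
  let H k := mx3
    0 0 0
    (alpha * l * ym * T * (gamma1 ^+ k / gamma1)) 0 0
    ((alpha * l * y + 2) * d * eps * l * ym ^+ 2 * T * (gamma1 ^+ k / gamma1))
      0 0 in
  let Delta := n%:R * s * c * d * eps * l * ym * (1 - sigma + tau) in
  let K := c * d * eps * l ^+ 2 * y * ym ^+ 2 * (l + n%:R * s) in
  let alphabar := Num.min
    ((Num.sqrt (Delta ^+ 2 + 4 * n%:R * s * (1 - sigma) ^+ 2 * K) - Delta)
       / (2 * K))
    (1 / (n%:R * l)) in
  0 < alpha < alphabar ->
  let Gamma1 := gamma1^-1 * Num.sqrt ((alpha * l * ym * T) ^+ 2
                   + (alpha * y * l + 2) ^+ 2 * (d * eps * l * ym ^+ 2 * T) ^+ 2) in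
  (* (a) *)
  (0 < Gamma1 /\ forall k, specnorm (H k) = Gamma1 * gamma1 ^+ k) /\
  (* (b) and (c) *)
  exists gamma2 Gamma2 : R,
    [/\ 0 < gamma2 < 1, 0 < Gamma2,
        forall k, specnorm (G ^+ k) <= Gamma2 * gamma2 ^+ k &
        let gamma := Num.max gamma1 gamma2 in
        let Gamma := Gamma1 * Gamma2 / gamma in
        forall k r, (r < k)%N ->
          specnorm (G ^+ (k - r - 1) *m H r) <= Gamma * gamma ^+ k].
Proof.
move=> n0 p0 conn Apos Azero Asum A Acvg yv Y Ycvg l0 s0 fdiff fD Lip SC.
move=> tau eps eta y ym /andP[g10 g11] T0 YT vn mn comp sigma sig1 c0 d0 cv dv.
move=> G H Delta K alphabar /andP[al0 alb] Gamma1.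
have [mn0 _ _ _ _] := mn.
have sig0 : 0 <= sigma by exact: mn0.
have tau0 : 0 <= tau by exact: specnorm_ge0.
have eps0 : 0 <= eps by exact: specnorm_ge0.
have y0 : 0 <= y.
  apply: (@sup_ge0' _ _ (specnorm (Y 0%N))); first by exists 0%N.
  by move=> x [k _ <-]; exact: specnorm_ge0.
have ym0 : 0 <= ym.
  apply: (@sup_ge0' _ _ (specnorm (invmx (Y 0%N)))); first by exists 0%N.
  by move=> x [k _ <-]; exact: specnorm_ge0.
have sl : s <= l.
  have i0n : 'I_n by exact: (Ordinal n0).
  exact: (s_le_l p0 l0 (Lip i0n) (SC i0n)).
have n0' : 0 < n%:R :> R by rewrite ltr0n.
move: alb; rewrite /alphabar lt_min => /andP[alX alnl].
have lns : 0 <= l + n%:R * s by have := mulr_gt0 n0' s0; lra.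
have K0 : 0 <= K.
  rewrite /K; apply: mulr_ge0 lns.
  by rewrite !mulr_ge0 ?exprn_ge0 // ltW.
have Kp : 0 < K.
  rewrite lt_neqAle K0 andbT eq_sym; apply/negP => /eqP K00.
  by move: alX; rewrite K00 !mulr0 invr0 mulr0 => /(lt_trans al0); rewrite ltxx.
have ymp : 0 < ym.
  rewrite lt_neqAle ym0 andbT eq_sym; apply/negP => /eqP ym00.
  by move: Kp; rewrite /K ym00 expr0n /= mulr0 mul0r ltxx.
have nal : n%:R * alpha * l < 1.
  move: alnl; rewrite ltr_pdivlMr ?mulr_gt0 //; lra.
have nas : n%:R * alpha * s <= n%:R * alpha * l.
  by rewrite ler_pM2l // mulr_gt0.
have etaE : eta = 1 - n%:R * alpha * s.
  rewrite /eta ger0_norm ?subr_ge0 ?ltW // ger0_norm ?subr_ge0; last by lra.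
  by apply/max_idPr; lra.
have ns0 : 0 < n%:R * s by rewrite mulr_gt0.
have Del0 : 0 <= Delta.
  rewrite /Delta; apply: mulr_ge0; last by lra.
  by rewrite !mulr_ge0 // ltW.
set Q := n%:R * s * (1 - sigma) ^+ 2 - alpha * Delta - alpha ^+ 2 * K.
have Qp : 0 < Q.
  set S := Num.sqrt _ in alX.
  have S0 : 0 <= S by exact: sqrtr_ge0.
  have S2 : S ^+ 2 = Delta ^+ 2 + 4 * n%:R * s * (1 - sigma) ^+ 2 * K.
    rewrite sqr_sqrtr //; apply: addr_ge0; first exact: sqr_ge0.
    apply: mulr_ge0 K0; apply: mulr_ge0 (sqr_ge0 _); apply: mulr_ge0 (ltW s0).
    exact: mulr_ge0.
  have X1 : 2 * K * alpha + Delta < S.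
    have K2 : 0 < 2 * K by apply: mulr_gt0.
    by move: alX; rewrite ltr_pdivlMr //; lra.
  have X0 : 0 <= 2 * K * alpha + Delta by rewrite addr_ge0 // !mulr_ge0 // ltW.
  have X2 : (2 * K * alpha + Delta) ^+ 2 < S ^+ 2.
    by rewrite -subr_gt0 subr_sqr mulr_gt0 // ?subr_gt0 //; lra.
  have : 0 < 4 * K * Q.
    have -> : 4 * K * Q = S ^+ 2 - (2 * K * alpha + Delta) ^+ 2.
      by rewrite S2 /Q; ring.
    by rewrite subr_gt0.
  by rewrite pmulr_rgt0 // mulr_gt0.
have nasp : 0 < n%:R * alpha * s by rewrite !mulr_gt0.
have [lam [Gm [lam0 lam1 Gm0 Gb]]] := @G_decay R sigma alpha (alpha * c * l * ym)
  eta (c * d * eps * l * ym * (tau + alpha * l * y * ym))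
  (alpha * d * eps * l ^+ 2 * y * ym) (alpha * c * d * eps * l * ym)
  sig0 sig1 al0 ltac:(by pos) ltac:(by rewrite etaE; lra)
  ltac:(by rewrite etaE; lra)
  ltac:(by pos)
  ltac:(by pos)
  ltac:(by pos)
  ltac:(by rewrite etaE (_ : _ - _ - _ = alpha * Q) ?mulr_gt0 // /Q /Delta /K; ring).
set X := fun k : nat => gamma1 ^+ k / gamma1.
have hk : forall k, Num.sqrt ((alpha * l * ym * T * X k) ^+ 2 +
     ((alpha * l * y + 2) * d * eps * l * ym ^+ 2 * T * X k) ^+ 2)
     = Gamma1 * gamma1 ^+ k.
  move=> k.
  rewrite (_ : _ + _ = X k ^+ 2 * ((alpha * l * ym * T) ^+ 2
                   + (alpha * y * l + 2) ^+ 2 * (d * eps * l * ym ^+ 2 * T) ^+ 2));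
    last by ring.
  rewrite sqrtrM ?sqr_ge0 // sqrtr_sqr ger0_norm; last first.
    by rewrite /X divr_ge0 // ?exprn_ge0 // ltW.
  by rewrite /Gamma1 /X; ring.
have Gam1 : 0 < Gamma1.
  rewrite /Gamma1 mulr_gt0 ?invr_gt0 // sqrtr_gt0.
  apply: ltr_wpDr; first by rewrite mulr_ge0 // sqr_ge0.
  by rewrite exprn_gt0 // !mulr_gt0.
have hb : forall k v, norm2 v <= 1 -> norm2 (H k *m v) <= Gamma1 * gamma1 ^+ k.
  move=> k v hv; rewrite Hnorm hk.
  have := coord_le v i0; have := normr_ge0 (v i0 0).
  have : 0 <= Gamma1 * gamma1 ^+ k by rewrite mulr_ge0 ?exprn_ge0 // ltW.
  nra.
split.
  split => // k; apply/le_anti/andP; split.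
    by apply: specnorm_le => v; exact: hb.
  have e1 : norm2 (col3 (1:R) 0 0) = 1.
    by rewrite norm23 !mxE /= expr1n expr0n /= !addr0 sqrtr1.
  have hv1 : norm2 (col3 (1:R) 0 0) <= 1 by rewrite e1.
  have := specnorm_ge (hb k) hv1.
  by rewrite Hnorm hk !mxE /= normr1 mul1r.
exists lam, Gm; split => //.
- by rewrite lam0 lam1.
- move=> k; apply: specnorm_le => v hv.
  apply: le_trans (Gb k v) _.
  by rewrite ler_piMr // mulr_ge0 // ?exprn_ge0 // ltW.
move=> k r rk.
set gamma := Num.max gamma1 lam.
set Gamma := Gamma1 * Gm / gamma.
have gl : lam <= gamma by rewrite le_max lexx orbT.
have gg : gamma1 <= gamma by rewrite le_max lexx.
have gp : 0 < gamma by exact: lt_le_trans lam0 gl.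
case: k rk => [//|j] rk.
have mE : (j.+1 - r - 1 = j - r)%N by rewrite subnAC subn1.
have rj : (r <= j)%N by [].
apply: specnorm_le => v hv.
rewrite -mulmxA mE; apply: le_trans (Gb _ _) _.
have hr := hb r v hv.
have E : Gamma * gamma ^+ j.+1 = Gm * (gamma ^+ (j - r) * (Gamma1 * gamma ^+ r)).
  have ej : gamma ^+ j = gamma ^+ (j - r) * gamma ^+ r by rewrite -exprD subnK.
  rewrite /Gamma exprS ej.
  transitivity (Gamma1 * Gm * (gamma / gamma) * (gamma ^+ (j - r) * gamma ^+ r));
    first by ring.
  by rewrite divff ?gt_eqF //; ring.
rewrite E -mulrA; apply: ler_wpM2l; first exact: ltW.
apply: ler_pM; first by rewrite exprn_ge0 // ltW.
  exact: norm2_ge0.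
  by apply: lerXn2r; rewrite ?nnegrE // ltW.
apply: le_trans hr _; apply: ler_wpM2l; first exact: ltW.
by apply: lerXn2r; rewrite ?nnegrE // ltW.
Qed.
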